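(* Let $(G,X)$ be a self-similar group with $|X|\ge1$. Then the Boolean inverse monoid $\mathcal G_{\mathrm{tight}}(S^{=}_{G,X})^a$ has exactly one normalized invariant mean $\mu$, namely the one determined on cylinder sets by $\mu(C(\alpha))=|X|^{-|\alpha|}$ for $\alpha\in X^*$ (and extended additively to clopen subsets of $X^\omega$, each of which is a finite disjoint union of cylinders).
   Context: $X$ is a finite set, $X^*$ the finite words over $X$ (including the empty word), $|\alpha|$ the length of $\alpha$, $X^\omega$ the Cantor space of infinite words, $C(\alpha)=\{\alpha x:x\in X^\omega\}$. A self-similar group $(G,X)$: a faithful length-preserving action of a group $G$ on $X^*$ with, for each $g,x$, a unique $g|_x\in G$ such that $g\cdot(x\alpha)=(g\cdot x)(g|_x\cdot\alpha)$; restrictions extend to words and the action extends to $X^\omega$ by $g\cdot(x_1x_2\cdots)=(g\cdot x_1)(g|_{x_1}\cdot x_2)(g|_{x_1x_2}\cdot x_3)\cdots$. $S_{G,X}=\{(\alpha,g,\beta)\}\cup\{0\}$ with $(\alpha,g,\beta)^*=(\beta,g^{-1},\alpha)$ and product $(\alpha,g,\beta)(\gamma,h,\nu)$ equal to $(\alpha(g\cdot\gamma'),g|_{\gamma'}h,\nu)$ if $\gamma=\beta\gamma'$, $(\alpha,g(h^{-1}|_{\beta'})^{-1},\nu(h^{-1}\cdot\beta'))$ if $\beta=\gamma\beta'$, and $0$ otherwise. $S^{=}_{G,X}=\{(\alpha,g,\beta)\in S_{G,X}:|\alpha|=|\beta|\}\cup\{0\}$ is an inverse submonoid with idempotents $(\alpha,1,\alpha)$.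 Its tight groupoid $\mathcal G_{\mathrm{tight}}(S^{=}_{G,X})$ has unit space $X^\omega$ and consists of germs $[(\alpha,g,\beta),\beta x]$ with $d=\beta x$ and $r=\alpha(g\cdot x)$, where $[s,x]=[t,x]$ iff $se=te$ for some idempotent $e=(\delta,1,\delta)$ with $x\in C(\delta)$; its topology is generated by the sets $\{[s,y]:y\in U\}$, $U$ open in the domain of $s$. $\mathcal G_{\mathrm{tight}}(S^{=}_{G,X})^a$ is the Boolean inverse monoid of compact open bisections (under setwise product and inverse); its idempotents are the clopen subsets of $X^\omega$. A normalized invariant mean on a Boolean inverse monoid $S$ is $\mu:E(S)\to[0,\infty)$ with $\mu(1)=1$, $\mu(s^*s)=\mu(ss^* )$ for all $s$, and $\mu(e\vee f)=\mu(e)+\mu(f)$ when $ef=0$. *)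

(* Defs.v *)
From HB Require Import structures.
From mathcomp Require Import all_boot.
From Stdlib Require Import Reals.

Set Implicit Arguments.
Unset Strict Implicit.
Unset Printing Implicit Defensive.

(* A self-similar group (G,X): a group G (possibly infinite, so given by its
   operations and axioms) with a faithful length-preserving action on X^*
   such that for each g, x there is a unique g|_x with
   g.(x a) = (g.x)(g|_x . a). *)
Record SSGroup (X : finType) := {
  ssg_car :> Type;
  gmul : ssg_car -> ssg_car -> ssg_car;
  gone : ssg_car;
  ginv : ssg_car -> ssg_car;
  gmulA : forall a b c, gmul a (gmul b c) = gmul (gmul a b) c;
  gmul1 : forall a, gmul gone a = a;
  gmulV : forall a, gmul (ginv a) a = gone;
  act : ssg_car -> seq X -> seq X;
  act_one : forall w, act gone w = w;
  act_mul : forall g h w, act (gmul g h) w = act g (act h w);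
  act_size : forall g w, size (act g w) = size w;
  act_faithful : forall g h, (forall w, act g w = act h w) -> g = h;
  res : ssg_car -> X -> ssg_car;
  act_res : forall g x w, act g (x :: w) = act g [:: x] ++ act (res g x) w;
  res_unique : forall g x h,
    (forall w, act g (x :: w) = act g [:: x] ++ act h w) -> h = res g x
}.

Definition Omega (X : Type) := nat -> X.

Section SS.
Variable X : finType.

Definition cyl (a : seq X) : Omega X -> Prop :=
  fun xi => forall i, i < size a -> xi i = nth (xi i) a i.

Definition ocat (a : seq X) (xi : Omega X) : Omega X :=
  fun n => if n < size a then nth (xi 0) a n else xi (n - size a).

Definition oshift (xi : Omega X) (k : nat) : Omega X := fun n => xi (n + k).

Definition oopen (U : Omega X -> Prop) : Prop :=
  forall xi, U xi -> exists n, forall eta, (forall i, i < n -> eta i = xi i) -> U eta.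

Definition clopen (U : Omega X -> Prop) : Prop :=
  oopen U /\ oopen (fun xi => ~ U xi).

Variable G : SSGroup X.

Fixpoint resw (g : G) (w : seq X) : G :=
  match w with [::] => g | x :: w' => resw (res g x) w' end.

Definition act1 (g : G) (x : X) : X := head x (act g [:: x]).

Definition omega_act (g : G) (xi : Omega X) : Omega X :=
  fun n => act1 (resw g (mkseq xi n)) (xi n).

(* non-zero elements (alpha, g, beta) of S_{G,X} *)
Record Tri := mkTri { ta : seq X; tg : G; tb : seq X }.

(* product in S_{G,X}; None stands for 0 *)
Definition Smul (s t : Tri) : option Tri :=
  let: mkTri a g b := s in
  let: mkTri c h n := t in
  if prefix b c then
    let c' := drop (size b) c in
    Some (mkTri (a ++ act g c') (gmul (resw g c') h) n)
  else if prefix c b then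
    let b' := drop (size c) b in
    Some (mkTri a (gmul g (ginv (resw (ginv h) b'))) (n ++ act (ginv h) b'))
  else None.

Definition idem (d : seq X) : Tri := mkTri d (@gone _ G) d.

Definition S_eq (s : Tri) : Prop := size (ta s) = size (tb s).

(* (s, xi) represents the germ [s, xi] of the tight groupoid *)
Definition germ_rep (s : Tri) (xi : Omega X) : Prop := S_eq s /\ cyl (tb s) xi.

Definition germ_eq (s t : Tri) (xi : Omega X) : Prop :=
  exists d, cyl d xi /\ Smul s (idem d) = Smul t (idem d).

Definition grange (s : Tri) (xi : Omega X) : Omega X :=
  ocat (ta s) (omega_act (tg s) (oshift xi (size (tb s)))).

(* subsets of the groupoid, as germ-invariant predicates on representatives *)
Definition gwf (B : Tri -> Omega X -> Prop) : Prop :=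
  (forall s xi, B s xi -> germ_rep s xi) /\
  (forall s t xi, B s xi -> germ_rep t xi -> germ_eq s t xi -> B t xi).

(* basic open sets {[s,y] : y in U}, U open in the domain C(b) of s *)
Definition basic_ok (s : Tri) (U : Omega X -> Prop) : Prop :=
  S_eq s /\ oopen U /\ (forall y, U y -> cyl (tb s) y).

Definition gopen (B : Tri -> Omega X -> Prop) : Prop :=
  forall s xi, B s xi ->
    exists U, basic_ok s U /\ U xi /\ (forall y, U y -> B s y).

Definition gcompact (B : Tri -> Omega X -> Prop) : Prop :=
  forall (I : Type) (bs : I -> Tri) (Us : I -> Omega X -> Prop),
    (forall i, basic_ok (bs i) (Us i)) ->
    (forall s xi, B s xi -> exists i, Us i xi /\ germ_eq (bs i) s xi) ->
    exists l : list I, forall s xi, B s xi ->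
      exists i, List.In i l /\ Us i xi /\ germ_eq (bs i) s xi.

Definition gbisection (B : Tri -> Omega X -> Prop) : Prop :=
  forall s t xi eta, B s xi -> B t eta ->
    ((forall n, xi n = eta n) -> germ_eq s t xi) /\
    ((forall n, grange s xi n = grange t eta n) ->
       (forall n, xi n = eta n) /\ germ_eq s t xi).

(* elements of G_tight(S^=_{G,X})^a *)
Definition cob (B : Tri -> Omega X -> Prop) : Prop :=
  gwf B /\ gopen B /\ gcompact B /\ gbisection B.

(* s^* s and s s^* as clopen subsets of the unit space X^omega *)
Definition gdom (B : Tri -> Omega X -> Prop) : Omega X -> Prop :=
  fun xi => exists s, B s xi.
Definition gran (B : Tri -> Omega X -> Prop) : Omega X -> Prop :=
  fun z => exists s xi, B s xi /\ forall n, grange s xi n = z n.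

(* normalized invariant mean on E(G_tight(S^=)^a) = clopen subsets of X^omega *)
Definition inv_mean (mu : (Omega X -> Prop) -> R) : Prop :=
  (forall A, clopen A -> Rle 0 (mu A)) /\
  mu (fun _ => True) = 1%R /\
  (forall B, cob B -> mu (gdom B) = mu (gran B)) /\
  (forall A B, clopen A -> clopen B -> (forall xi, ~ (A xi /\ B xi)) ->
     mu (fun xi => A xi \/ B xi) = Rplus (mu A) (mu B)).

End SS.

(* Main.v *)
Require Import Defs.
From HB Require Import structures.
From mathcomp Require Import all_boot.
From Stdlib Require Import Reals.
From Stdlib Require Import Classical ClassicalEpsilon FunctionalExtensionality PropExtensionality Lra Lia.
From mathcomp Require Import zify.

Set Implicit Arguments.
Unset Strict Implicit.
Unset Printing Implicit Defensive.

Section Basic.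
Variable X : finType.
Variable G : SSGroup X.

Lemma gmul1r (a : G) : gmul a (gone G) = a.
Proof.
have h: forall b : G, gmul b b = b -> b = gone G.
  move=> b hb. by rewrite -(gmul1 b) -(gmulV b) -gmulA hb.
have e: gmul a (ginv a) = gone G.
  apply: h. by rewrite -gmulA (gmulA (ginv a) a) gmulV gmul1.
by rewrite -(gmulV a) gmulA e gmul1.
Qed.

Lemma gmulrV (a : G) : gmul a (ginv a) = gone G.
Proof.
have h: forall b : G, gmul b b = b -> b = gone G.
  move=> b hb. by rewrite -(gmul1 b) -(gmulV b) -gmulA hb.
apply: h. by rewrite -gmulA (gmulA (ginv a) a) gmulV gmul1.
Qed.

Lemma ginv1 : ginv (gone G) = gone G.
Proof. by rewrite -{2}(gmulV (gone G)) gmul1r. Qed.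

Lemma gmul_canr (a b c : G) : gmul a c = gmul b c -> a = b.
Proof.
move=> h. have := f_equal (fun z => gmul z (ginv c)) h.
by rewrite -!gmulA gmulrV !gmul1r.
Qed.

Lemma act_nil (g : G) : act g [::] = [::].
Proof. by apply/size0nil; rewrite act_size. Qed.

Lemma act_single (g : G) x : act g [:: x] = [:: act1 g x].
Proof.
rewrite /act1. have := act_size g [:: x].
by case: (act g [:: x]) => [|y [|z s]].
Qed.

Lemma act_cat (g : G) u v : act g (u ++ v) = act g u ++ act (resw g u) v.
Proof.
elim: u g => [|x u IH] g /=; first by rewrite act_nil.
by rewrite act_res IH [act g (x :: u)]act_res catA.
Qed.

Lemma resw_cat (g : G) u v : resw (resw g u) v = resw g (u ++ v).
Proof. by elim: u g => [|x u IH] g //=. Qed.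

Lemma act_rcons (g : G) w x :
  act g (rcons w x) = rcons (act g w) (act1 (resw g w) x).
Proof. by rewrite -!cats1 act_cat act_single. Qed.

Lemma act_inv (g : G) w : act (ginv g) (act g w) = w.
Proof. by rewrite -act_mul gmulV act_one. Qed.

Lemma act_invr (g : G) w : act g (act (ginv g) w) = w.
Proof. by rewrite -act_mul gmulrV act_one. Qed.

Lemma resw_one w : resw (gone G) w = gone G.
Proof.
elim: w => [|x w IH] //=.
have -> : res (gone G) x = gone G; last by [].
symmetry; apply: res_unique => v. by rewrite !act_one.
Qed.

Definition agree (n : nat) (xi eta : Omega X) := forall i, i < n -> xi i = eta i.

Lemma mkseq_agree n (xi eta : Omega X) : agree n xi eta -> mkseq xi n = mkseq eta n.
Proof.
move=> h; apply: (@eq_from_nth _ (xi 0)); first by rewrite !size_mkseq.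
by rewrite size_mkseq => i hi; rewrite !nth_mkseq // h.
Qed.

Lemma agree_mkseq n (xi eta : Omega X) : mkseq xi n = mkseq eta n -> agree n xi eta.
Proof.
move=> h i hi. have := f_equal (nth (xi 0) ^~ i) h. by rewrite !nth_mkseq.
Qed.

Lemma cylE (w : seq X) xi : cyl w xi <-> mkseq xi (size w) = w.
Proof.
split.
- move=> h; apply: (@eq_from_nth _ (xi 0)); first by rewrite size_mkseq.
  rewrite size_mkseq => i hi; rewrite nth_mkseq // h //.
  by apply: set_nth_default.
- move=> h i hi. have := f_equal (nth (xi i) ^~ i) h. by rewrite nth_mkseq // => <-.
Qed.

Lemma cyl_mkseq (xi eta : Omega X) n : cyl (mkseq xi n) eta <-> agree n eta xi.
Proof.
rewrite cylE size_mkseq; split; first exact: agree_mkseq.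
exact: mkseq_agree.
Qed.

Lemma cyl_self (xi : Omega X) n : cyl (mkseq xi n) xi.
Proof. by apply/cyl_mkseq. Qed.

Lemma cyl_same (u v : seq X) z : size u = size v -> cyl u z -> cyl v z -> u = v.
Proof. by move=> hs /cylE hu /cylE hv; rewrite -hu -hv hs. Qed.

Lemma cyl_agree (w : seq X) xi eta : cyl w xi -> agree (size w) xi eta -> cyl w eta.
Proof. move=> /cylE h ha; apply/cylE. by rewrite -(mkseq_agree ha). Qed.

Lemma cyl_prefix (u v : seq X) xi : cyl u xi -> cyl v xi -> size u <= size v -> prefix u v.
Proof.
move=> /cylE hu /cylE hv huv. rewrite prefixE; apply/eqP.
rewrite -hv /mkseq -map_take take_iota.
by rewrite (minn_idPl huv).
Qed.

Lemma cyl_comparable (u v : seq X) xi : cyl u xi -> cyl v xi -> prefix u v \/ prefix v u.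
Proof.
move=> hu hv. case: (leqP (size u) (size v)) => h.
  by left; apply: cyl_prefix hu hv h.
by right; apply: cyl_prefix hv hu (ltnW h).
Qed.

Lemma cyl_catl (u v : seq X) xi : cyl (u ++ v) xi -> cyl u xi.
Proof.
move=> h i hi. rewrite h ?size_cat ?(leq_trans hi) ?leq_addr //.
by rewrite nth_cat hi; apply: set_nth_default.
Qed.

Lemma cyl_shift (u v : seq X) xi : cyl (u ++ v) xi -> cyl v (oshift xi (size u)).
Proof.
move=> h i hi. rewrite /oshift h ?size_cat; last by lia.
rewrite nth_cat ltnNge leq_addl /= addnK. by apply: set_nth_default.
Qed.

Lemma cyl_ocat (u v : seq X) eta : cyl v eta -> cyl (u ++ v) (ocat u eta).
Proof.
move=> h i hi. rewrite /ocat nth_cat. case: ltnP => hiu.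
  by apply: set_nth_default.
rewrite size_cat in hi. rewrite h; last by lia.
by apply: set_nth_default; lia.
Qed.

Lemma cyl_ocat_self (u : seq X) eta : cyl u (ocat u eta).
Proof. by have := @cyl_ocat u [::] eta; rewrite cats0; apply. Qed.

Lemma cyl_nil (xi : Omega X) : cyl [::] xi.
Proof. by []. Qed.

Lemma mkseq_ocat (u : seq X) eta k : mkseq (ocat u eta) (size u + k) = u ++ mkseq eta k.
Proof.
apply: (@eq_from_nth _ (eta 0)).
  by rewrite size_mkseq size_cat size_mkseq.
rewrite size_mkseq => i hi. rewrite nth_mkseq // nth_cat /ocat.
case: ltnP => h //.
rewrite nth_mkseq //. lia.
Qed.

Lemma ocat_shift (u : seq X) xi : cyl u xi -> ocat u (oshift xi (size u)) = xi.
Proof.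
move=> h; apply: functional_extensionality => n. rewrite /ocat /oshift.
case: ltnP => hn; first by symmetry; rewrite h //; apply: set_nth_default.
by rewrite subnK.
Qed.

Lemma shift_ocat (u : seq X) eta : oshift (ocat u eta) (size u) = eta.
Proof.
apply: functional_extensionality => n. rewrite /ocat /oshift.
by rewrite ltnNge leq_addl /= addnK.
Qed.

Lemma ocat_cat (u v : seq X) eta : ocat u (ocat v eta) = ocat (u ++ v) eta.
Proof.
apply: functional_extensionality => n. rewrite /ocat size_cat nth_cat.
case: (ltnP n (size u)) => h1; case: (ltnP n (size u + size v)) => h2;
  case: (ltnP (n - size u) (size v)) => h3 //; try (exfalso; lia);
  try (by apply: set_nth_default); by rewrite subnDA.
Qed.

Lemma shift_shift (xi : Omega X) a b : oshift (oshift xi a) b = oshift xi (a + b).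
Proof. by apply: functional_extensionality => n; rewrite /oshift; congr (xi _); lia. Qed.

Lemma shift_cat (u v : seq X) xi : cyl (u ++ v) xi ->
  oshift xi (size u) = ocat v (oshift xi (size u + size v)).
Proof.
move=> h. have hs := cyl_shift h.
by rewrite -shift_shift ocat_shift.
Qed.

Lemma eq_from_mkseq (f h : Omega X) c : (forall k, mkseq f (c + k) = mkseq h (c + k)) -> f = h.
Proof.
move=> H; apply: functional_extensionality => n.
have := f_equal (nth (f 0) ^~ n) (H n.+1).
by rewrite !nth_mkseq // addnS ltnS leq_addl.
Qed.

Lemma omega_prefix (g : G) xi n : mkseq (omega_act g xi) n = act g (mkseq xi n).
Proof.
elim: n => [|n IH]; first by rewrite act_nil.
by rewrite !mkseqS IH act_rcons.
Qed.

Lemma omega_one xi : omega_act (gone G) xi = xi.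
Proof. apply: (@eq_from_mkseq _ _ 0) => k. by rewrite omega_prefix act_one. Qed.

Lemma omega_mul (g h : G) xi : omega_act (gmul g h) xi = omega_act g (omega_act h xi).
Proof. apply: (@eq_from_mkseq _ _ 0) => k. by rewrite !omega_prefix act_mul. Qed.

Lemma omega_ocat (g : G) u eta :
  omega_act g (ocat u eta) = ocat (act g u) (omega_act (resw g u) eta).
Proof.
apply: (@eq_from_mkseq _ _ (size u)) => k.
rewrite omega_prefix mkseq_ocat act_cat -omega_prefix.
by rewrite -(act_size g u) mkseq_ocat.
Qed.

Lemma omega_cyl (g : G) u eta : cyl u eta -> cyl (act g u) (omega_act g eta).
Proof. move=> /cylE h; apply/cylE. by rewrite act_size omega_prefix h. Qed.


Definition ge (s t : Tri G) (d : seq X) : Prop :=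
  prefix (tb s) d /\ prefix (tb t) d /\
  ta s ++ act (tg s) (drop (size (tb s)) d) = ta t ++ act (tg t) (drop (size (tb t)) d) /\
  resw (tg s) (drop (size (tb s)) d) = resw (tg t) (drop (size (tb t)) d).

Lemma Smul_pre (s : Tri G) d : prefix (tb s) d ->
  Smul s (idem G d) = Some (mkTri (ta s ++ act (tg s) (drop (size (tb s)) d))
     (gmul (resw (tg s) (drop (size (tb s)) d)) (gone G)) d).
Proof. by case: s => a g b /= h; rewrite /Smul /idem h. Qed.

Lemma Smul_npre (s : Tri G) d : ~~ prefix (tb s) d -> prefix d (tb s) ->
  Smul s (idem G d) = Some (mkTri (ta s)
     (gmul (tg s) (ginv (resw (gone G) (drop (size d) (tb s)))))
     (d ++ drop (size d) (tb s))).
Proof.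
case: s => a g b /= h1 h2; rewrite /Smul /idem (negbTE h1) h2.
by rewrite ginv1 act_one.
Qed.

Lemma drop_prefix (b d : seq X) : prefix b d -> d = b ++ drop (size b) d.
Proof. by case/prefixP => r ->; rewrite drop_size_cat. Qed.

Lemma ge_germ (s t : Tri G) d xi : cyl d xi -> ge s t d -> germ_eq s t xi.
Proof.
move=> hd [h1 [h2 [h3 h4]]]. exists d; split => //.
by rewrite !Smul_pre // h3 h4.
Qed.

Lemma ge_refl (s : Tri G) : ge s s (tb s).
Proof. by split; [|split]; rewrite ?prefix_refl. Qed.

Lemma ge_sym (s t : Tri G) d : ge s t d -> ge t s d.
Proof. by move=> [h1 [h2 [h3 h4]]]; do !split. Qed.

Lemma ge_trans (s t u : Tri G) d : ge s t d -> ge t u d -> ge s u d.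
Proof.
move=> [h1 [h2 [h3 h4]]] [h1' [h2' [h3' h4']]]; split => //; split => //.
by rewrite h3 h3' h4 h4'.
Qed.

Lemma drop_cat_pre (b d v : seq X) : prefix b d ->
  drop (size b) (d ++ v) = drop (size b) d ++ v.
Proof. case/prefixP => r ->. by rewrite -catA !drop_size_cat. Qed.

Lemma ge_mono (s t : Tri G) d v : ge s t d -> ge s t (d ++ v).
Proof.
move=> [h1 [h2 [h3 h4]]]; split; first exact: prefix_catl.
split; first exact: prefix_catl.
rewrite !drop_cat_pre // !act_cat !catA h3 -!resw_cat h4; split => //.
Qed.

Lemma germ_eq_ge (s t : Tri G) xi : germ_rep s xi -> germ_rep t xi -> germ_eq s t xi ->
  exists d, cyl d xi /\ ge s t d.
Proof.
case: s => a g b; case: t => a' g' b' [hs hb] [ht hb'] [d [hd heq]] /=.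

case E1: (prefix b d); case E2: (prefix b' d).
- move: heq; rewrite !(@Smul_pre (mkTri _ _ _)) //= => -[e1 e2].
  exists d; split => //; do !split => //=.
  by move: e2; rewrite !gmul1r.
- have h2 : prefix d b'.
    case: (cyl_comparable hd hb') => //; by rewrite E2.
  move: heq; rewrite (@Smul_pre (mkTri _ _ _)) // (@Smul_npre (mkTri _ _ _)) /= ?E2 //.
  move=> -[_ _ e]. have := f_equal size e; rewrite size_cat => hsz.
  have hz : drop (size d) b' = [::] by apply/size0nil; lia.
  by move: E2; rewrite (drop_prefix h2) hz cats0 prefix_refl.
- have h2 : prefix d b.
    case: (cyl_comparable hd hb) => //; by rewrite E1.
  move: heq; rewrite (@Smul_pre (mkTri a' _ _)) // (@Smul_npre (mkTri a _ _)) /= ?E1 //.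
  move=> -[_ _ e]. have := f_equal size e; rewrite size_cat => hsz.
  have hz : drop (size d) b = [::] by apply/size0nil; lia.
  by move: E1; rewrite (drop_prefix h2) hz cats0 prefix_refl.
- have h1 : prefix d b.
    case: (cyl_comparable hd hb) => //; by rewrite E1.
  have h2 : prefix d b'.
    case: (cyl_comparable hd hb') => //; by rewrite E2.
  move: heq; rewrite !(@Smul_npre (mkTri _ _ _)) /= ?E1 ?E2 //.
  move=> -[ea eg eb].
  have edr : drop (size d) b = drop (size d) b'.
    by have := f_equal (drop (size d)) eb; rewrite !drop_size_cat.
  have ebb : b = b' by rewrite (drop_prefix h1) (drop_prefix h2) edr.
  subst a' b'. have eg' := gmul_canr eg. subst g'.
  exists b; split => //. exact: (ge_refl (mkTri a g b)).
Qed.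

Lemma germ_eq_refl (s : Tri G) xi : germ_eq s s xi.
Proof. by exists [::]. Qed.

Lemma germ_eq_sym (s t : Tri G) xi : germ_eq s t xi -> germ_eq t s xi.
Proof. by move=> [d [h1 h2]]; exists d. Qed.

Lemma germ_eq_trans (s t u : Tri G) xi : germ_rep s xi -> germ_rep t xi -> germ_rep u xi ->
  germ_eq s t xi -> germ_eq t u xi -> germ_eq s u xi.
Proof.
move=> hs ht hu e1 e2.
case: (germ_eq_ge hs ht e1) => d1 [hd1 g1].
case: (germ_eq_ge ht hu e2) => d2 [hd2 g2].
case: (cyl_comparable hd1 hd2) => /drop_prefix e.
- apply: (ge_germ hd2). have g1' := ge_mono (drop (size d1) d2) g1.
  rewrite -e in g1'. exact: ge_trans g1' g2.
- apply: (ge_germ hd1). have g2' := ge_mono (drop (size d2) d1) g2.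
  rewrite -e in g2'. exact: ge_trans g1 g2'.
Qed.

Lemma grange_pre (s : Tri G) d xi : prefix (tb s) d -> cyl d xi ->
  grange s xi = ocat (ta s ++ act (tg s) (drop (size (tb s)) d))
     (omega_act (resw (tg s) (drop (size (tb s)) d)) (oshift xi (size d))).
Proof.
move=> hp hd. have e := drop_prefix hp. set r := drop (size (tb s)) d in e *.
have hc : cyl (tb s ++ r) xi by rewrite -e.
rewrite /grange (shift_cat hc) omega_ocat ocat_cat -size_cat -e //.
Qed.

Lemma germ_grange (s t : Tri G) xi : germ_rep s xi -> germ_rep t xi -> germ_eq s t xi ->
  grange s xi = grange t xi.
Proof.
move=> hs ht he. case: (germ_eq_ge hs ht he) => d [hd [h1 [h2 [h3 h4]]]].
by rewrite (grange_pre h1 hd) (grange_pre h2 hd) h3 h4.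
Qed.

Lemma grange_cyl (s : Tri G) w xi : prefix (tb s) w -> cyl w xi ->
  cyl (ta s ++ act (tg s) (drop (size (tb s)) w)) (grange s xi).
Proof. move=> hp hw. rewrite (grange_pre hp hw). exact: cyl_ocat_self. Qed.

Lemma grange_surj (s : Tri G) u z : size (ta s) = size (tb s) ->
  cyl (ta s ++ act (tg s) u) z -> exists xi, cyl (tb s ++ u) xi /\ grange s xi = z.
Proof.
move=> hsz hz. exists (ocat (tb s) (omega_act (ginv (tg s)) (oshift z (size (ta s))))).
split.
- apply: cyl_ocat. rewrite -[X in cyl X _](act_inv (tg s) u). apply: omega_cyl. exact: cyl_shift hz.
- rewrite /grange shift_ocat -omega_mul gmulrV omega_one. apply: ocat_shift.
  exact: cyl_catl hz.
Qed.

End Basic.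

Section Compact.
Variable X : finType.
Variable x0 : X.

Definition det (A : Omega X -> Prop) n := forall xi eta, agree n xi eta -> (A xi <-> A eta).

Fixpoint allw k : seq (seq X) :=
  if k is k'.+1 then [seq rcons w x | w <- allw k', x <- enum X] else [:: [::]].

Lemma mem_allw k w : (w \in allw k) = (size w == k).
Proof.
elim: k w => [|k IH] w /=; first by rewrite mem_seq1; case: w.
apply/idP/idP.
- move/flattenP => [s /mapP [w' hw' ->] /mapP [x _ ->]].
  by rewrite size_rcons eqSS -IH.
- move=> /eqP. case/lastP: w => [|w' x] // hs. rewrite size_rcons in hs.
  apply/flattenP. exists (map (rcons w') (enum X)).
    apply/mapP; exists w' => //; rewrite IH; by case: hs => ->.
  apply/mapP; exists x => //; by rewrite mem_enum.
Qed.

Lemma rcons_inj2 (w w' : seq X) x x' : rcons w x = rcons w' x' -> w = w' /\ x = x'.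
Proof.
move=> h. have := f_equal rev h. rewrite !rev_rcons => -[e1 e2].
by split => //; rewrite -(revK w) e2 revK.
Qed.

Lemma uniq_allw k : uniq (allw k).
Proof.
elim: k => [|k IH] //=. apply: allpairs_uniq => //; first exact: enum_uniq.
move=> [w x] [w' x'] _ _ /= h. by case: (rcons_inj2 h) => -> ->.
Qed.

Section Fan.
Variable Good : seq X -> Prop.
Hypothesis mono : forall w v, Good w -> Good (w ++ v).

Definition rich w := forall m, exists v, size v = m /\ ~ Good (w ++ v).

Lemma mono' w m m' : m <= m' -> (forall v, size v = m -> Good (w ++ v)) ->
  forall v, size v = m' -> Good (w ++ v).
Proof.
move=> hm H v hv. rewrite -(cat_take_drop m v) catA. apply: mono. apply: H.
by rewrite size_takel // hv.
Qed.

Lemma rich_step w : rich w -> exists x, rich (rcons w x).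
Proof.
move=> hw. apply: NNPP => hn.
have hx : forall x, exists m, forall v, size v = m -> Good (rcons w x ++ v).
  move=> x. apply: NNPP => h. apply: hn. exists x => m. apply: NNPP => h2.
  apply: h. exists m => v hv. apply: NNPP => h3. apply: h2. by exists v.
have [M HM] : exists M, forall x, x \in enum X -> forall v, size v = M -> Good (rcons w x ++ v).
  elim: (enum X) => [|x s [M IH]]; first by exists 0 => x; rewrite in_nil.
  case: (hx x) => m Hm. exists (maxn m M) => y; rewrite in_cons => /orP [/eqP -> | hy].
    apply: mono' Hm; exact: leq_maxl.
  apply: mono' (IH y hy); exact: leq_maxr.
case: (hw M.+1) => v [hv hg]. case: v hv hg => [|y v] // [hv] hg.
apply: hg. rewrite -cat_rcons. apply: HM => //. by rewrite mem_enum.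
Qed.

Definition nextw w := epsilon (inhabits x0) (fun x => rich (rcons w x)).
Definition fpath k := iter k (fun w => rcons w (nextw w)) [::].

Lemma fan : (forall xi : Omega X, exists n, Good (mkseq xi n)) ->
  exists N, forall w, size w = N -> Good w.
Proof.
move=> cov. apply: NNPP => hN.
have r0 : rich [::].
  move=> m. apply: NNPP => h; apply: hN; exists m => w hw; apply: NNPP => hg; apply: h.
  by exists w.
have fr : forall k, rich (fpath k).
  elim => // k IH. rewrite /fpath iterS -/(fpath k).
  apply: (epsilon_spec (inhabits x0) (fun x => rich (rcons (fpath k) x))). exact: rich_step.
have fs : forall k, size (fpath k) = k.
  elim => // k IH. by rewrite /fpath iterS -/(fpath k) size_rcons IH.
pose xi := fun n => nth x0 (fpath n.+1) n.
have hm : forall k, mkseq xi k = fpath k.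
  elim => // k IH. rewrite mkseqS IH /xi /fpath iterS -/(fpath k).
  by rewrite nth_rcons fs ltnn eqxx.
case: (cov xi) => n hn. rewrite hm in hn. case: (fr n 0) => v [hv hg]. apply: hg.
by rewrite (size0nil hv) cats0.
Qed.
End Fan.

Lemma cyl_compact (a : seq X) (I : Type) (V : I -> Omega X -> Prop) :
  (forall i, oopen (V i)) -> (forall xi, cyl a xi -> exists i, V i xi) ->
  exists l : list I, forall xi, cyl a xi -> exists i, List.In i l /\ V i xi.
Proof.
move=> hop hcov.
pose Good w := (forall y, cyl w y -> ~ cyl a y) \/ exists i, forall y, cyl w y -> V i y.
have [N HN] : exists N, forall w, size w = N -> Good w.
  apply: fan.
  - move=> w v [h|[i h]]; [left|right; exists i] => y hy; apply: h; exact: cyl_catl hy.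
  - move=> xi. case: (classic (cyl a xi)) => ha.
    + case: (hcov xi ha) => i hi. case: (hop i xi hi) => n hn.
      exists n; right; exists i => y /cyl_mkseq hy; exact: hn.
    + exists (size a); left => y /cylE hy /cylE hya. apply: ha; apply/cylE.
      by rewrite size_mkseq in hy; rewrite -hy hya.
have [l Hl] : exists l : list I, forall w, w \in allw N ->
    (forall y, cyl w y -> ~ cyl a y) \/ exists i, List.In i l /\ forall y, cyl w y -> V i y.
  have gen : forall s : seq (seq X), (forall w, w \in s -> size w = N) ->
    exists l : list I, forall w, w \in s ->
    (forall y, cyl w y -> ~ cyl a y) \/ exists i, List.In i l /\ forall y, cyl w y -> V i y.
    elim => [|w s IH] hs. exists nil => w. by rewrite in_nil.
    case: IH => [w' hw'|l IH]; first by apply: hs; rewrite in_cons hw' orbT.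
    have : Good w by apply: HN; apply: hs; rewrite in_cons eqxx.
    move=> [h|[i h]].
      exists l => w'; rewrite in_cons => /orP [/eqP ->|hw']; first by left.
      exact: IH.
    exists (i :: l) => w'; rewrite in_cons => /orP [/eqP ->|hw'].
      by right; exists i; split => //; left.
    case: (IH w' hw') => [h'|[j [hj h']]]; first by left.
    by right; exists j; split => //; right.
  apply: gen => w; rewrite mem_allw; by move/eqP.
exists l => xi hxi. have : mkseq xi N \in allw N by rewrite mem_allw size_mkseq.
move/Hl => [h|[i [hi h]]]. have hc := @cyl_self _ xi N. by case: (h xi hc hxi).
exists i; split => //. exact: h (@cyl_self _ xi N).
Qed.

Lemma clopen_det (A : Omega X -> Prop) : clopen A -> exists n, det A n.
Proof.
move=> [h1 h2].
pose Good w := (forall y, cyl w y -> A y) \/ (forall y, cyl w y -> ~ A y).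
have [N HN] : exists N, forall w, size w = N -> Good w.
  apply: fan.
  - move=> w v [h|h]; [left|right] => y hy; apply: h; exact: cyl_catl hy.
  - move=> xi. case: (classic (A xi)) => ha.
    + case: (h1 xi ha) => n hn. exists n; left => y /cyl_mkseq; exact: hn.
    + case: (h2 xi ha) => n hn. exists n; right => y /cyl_mkseq; exact: hn.
exists N => xi eta hag.
have hw : size (mkseq xi N) = N by rewrite size_mkseq.
have he : cyl (mkseq xi N) eta by apply/cyl_mkseq => i hi; rewrite hag.
case: (HN _ hw) => h.
- split => _; apply: h; first [exact: he | exact: (@cyl_self _ xi N)].
- split => hh; first by case: (h xi (@cyl_self _ xi N) hh).
  by case: (h eta he hh).
Qed.

Lemma det_clopen (A : Omega X -> Prop) n : det A n -> clopen A.
Proof.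
move=> h; split => xi hxi; exists n => eta he.
- by apply/(h xi eta) => // i hi; rewrite he.
- move=> hA; apply: hxi. by apply/(h xi eta) => // i hi; rewrite he.
Qed.

Lemma det_mono (A : Omega X -> Prop) n m : n <= m -> det A n -> det A m.
Proof. move=> hnm h xi eta he. apply: h => i hi; apply: he; exact: leq_trans hnm. Qed.

Lemma det_cyl (w : seq X) : det (cyl w) (size w).
Proof.
move=> xi eta he; split => h; apply: (cyl_agree h) => i hi; rewrite he //.
Qed.

End Compact.

Definition asb (P : Prop) : bool := if excluded_middle_informative P then true else false.

Lemma asbP (P : Prop) : asb P = true <-> P.
Proof. rewrite /asb; case: excluded_middle_informative => //. Qed.

Lemma asb_iff (P Q : Prop) : (P <-> Q) -> asb P = asb Q.
Proof.
move=> h; rewrite /asb; case: excluded_middle_informative => h1;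
  case: excluded_middle_informative => h2 //; exfalso; tauto.
Qed.

Section Measure.
Variable X : finType.
Variable x0 : X.

Definition c0 : Omega X := fun _ => x0.
Definition rr : R := Rinv (INR #|X|).
Definition cnt (A : Omega X -> Prop) n := count (fun u => asb (A (ocat u c0))) (allw X n).
Definition lvl (A : Omega X -> Prop) := epsilon (inhabits 0) (det A).
Definition mu (A : Omega X -> Prop) : R := (INR (cnt A (lvl A)) * rr ^ lvl A)%R.

Lemma NX : (0 < #|X|)%N.
Proof. apply/card_gt0P. by exists x0. Qed.

Lemma INRX : INR #|X| <> 0%R.
Proof. apply: not_0_INR. have := NX. lia. Qed.

Lemma rr_pos : (0 <= rr)%R.
Proof. rewrite /rr. apply: Rlt_le. apply: Rinv_0_lt_compat. apply: lt_0_INR. have := NX. lia. Qed.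

Lemma agree_rcons (w : seq X) x c : agree (size w) (ocat (rcons w x) c) (ocat w c).
Proof.
move=> i hi. rewrite /ocat size_rcons (leq_trans hi (leqnSn _)) hi nth_rcons hi.
by apply: set_nth_default.
Qed.

Lemma cnt_step A n : det A n -> cnt A n.+1 = (#|X| * cnt A n)%N.
Proof.
move=> hd. rewrite /cnt /=.
have : forall w, w \in allw X n -> size w = n by move=> w; rewrite mem_allw => /eqP.
elim: (allw X n) => [|w L IH] hL /=; first by rewrite muln0.
rewrite count_cat IH; last by move=> w' h; apply: hL; rewrite in_cons h orbT.
rewrite count_map.
have hw : size w = n by apply: hL; rewrite in_cons eqxx.
rewrite (@eq_count _ _ (fun _ => asb (A (ocat w c0)))); last first.
  move=> x /=. apply: asb_iff. apply: hd. rewrite -hw. exact: agree_rcons.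
case: (asb _).
- rewrite (@eq_count _ _ predT) // count_predT -cardE. lia.
- rewrite (@eq_count _ _ pred0) // count_pred0. lia.
Qed.

Lemma cnt_shift A n j : det A n ->
  (INR (cnt A (n + j)) * rr ^ (n + j) = INR (cnt A n) * rr ^ n)%R.
Proof.
move=> hd. elim: j => [|j IH]; first by rewrite addn0.
rewrite addnS cnt_step; last by apply: det_mono hd; exact: leq_addr.
rewrite -IH -multE mult_INR /= /rr.
have h : (INR #|X| * / INR #|X|)%R = 1%R by apply: Rinv_r; exact: INRX.
set a := INR (cnt A (n + j)); set p := ((/ INR #|X|) ^ (n + j))%R.
set q := (/ INR #|X|)%R in h p *. set b := INR #|X| in h *.
transitivity (a * p * (b * q))%R; first ring.
rewrite h; ring.
Qed.

Lemma mu_det A n : det A n -> mu A = (INR (cnt A n) * rr ^ n)%R.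
Proof.
move=> hd. have hm : det A (lvl A).
  apply: (epsilon_spec (inhabits 0) (det A)). by exists n.
rewrite /mu. have e1 := cnt_shift (maxn n (lvl A) - lvl A) hm.
have e2 := cnt_shift (maxn n (lvl A) - n) hd.
rewrite subnKC in e1; last exact: leq_maxr.
rewrite subnKC in e2; last exact: leq_maxl.
by rewrite -e1 -e2.
Qed.

Lemma mu_ge0 A : (0 <= mu A)%R.
Proof. rewrite /mu. apply: Rmult_le_pos; [exact: pos_INR | apply: pow_le; exact: rr_pos]. Qed.

Lemma mu_true : mu (fun _ => True) = 1%R.
Proof.
rewrite (@mu_det _ 0); last by move=> *.
rewrite /cnt /=. have -> : asb True = true by apply/asbP.
by rewrite /= Rmult_1_l.
Qed.

Lemma cyl_ocat_iff (a u : seq X) : size u = size a -> (cyl a (ocat u c0) <-> u = a).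
Proof.
move=> hs; split => [h|->]; last exact: (@cyl_ocat_self _ a c0).
apply: (@cyl_same _ u a (ocat u c0)) => //. exact: (@cyl_ocat_self _ u c0).
Qed.

Lemma mu_cyl a : mu (cyl a) = (rr ^ size a)%R.
Proof.
rewrite (mu_det (@det_cyl _ a)) /cnt.
rewrite (@eq_in_count _ _ (pred1 a)); last first.
  move=> u; rewrite mem_allw => /eqP hu /=.
  apply/idP/eqP; first by move/asbP/(cyl_ocat_iff hu).
  by move=> ->; apply/asbP; exact: (@cyl_ocat_self _ a c0).
rewrite count_uniq_mem ?uniq_allw // mem_allw eqxx /=. ring.
Qed.

Lemma det_or (A B : Omega X -> Prop) n : det A n -> det B n -> det (fun xi => A xi \/ B xi) n.
Proof. move=> ha hb xi eta he. have := ha xi eta he; have := hb xi eta he. tauto. Qed.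

Lemma mu_add A B : clopen A -> clopen B -> (forall xi, ~ (A xi /\ B xi)) ->
  mu (fun xi => A xi \/ B xi) = (mu A + mu B)%R.
Proof.
move=> cA cB hd. case: (clopen_det x0 cA) => na ha. case: (clopen_det x0 cB) => nb hb.
have ha' := det_mono (leq_maxl na nb) ha. have hb' := det_mono (leq_maxr na nb) hb.
rewrite (mu_det (det_or ha' hb')) (mu_det ha') (mu_det hb').
have -> : cnt (fun xi => A xi \/ B xi) (maxn na nb) = (cnt A (maxn na nb) + cnt B (maxn na nb))%N.
  rewrite /cnt -count_predUI.
  rewrite (@eq_count _ (predI _ _) pred0); last first.
    move=> u /=. apply/negP => /andP [/asbP h1 /asbP h2]. exact: (hd _ (conj h1 h2)).
  rewrite count_pred0 addn0. apply: eq_count => u /=.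
  case E1: (asb (A _)); case E2: (asb (B _)) => /=.
  + apply/asbP; left; exact/asbP.
  + apply/asbP; left; exact/asbP.
  + apply/asbP; right; exact/asbP.
  + apply/negbTE/negP => /asbP [h|h]. by move/asbP: h; rewrite E1. by move/asbP: h; rewrite E2.
rewrite -plusE plus_INR. ring.
Qed.

Definition U (L : seq (seq X)) : Omega X -> Prop := fun z => exists w, w \in L /\ cyl w z.

Lemma det_U L m : (forall w, w \in L -> size w = m) -> det (U L) m.
Proof.
move=> hL xi eta he; split => -[w [hw hc]]; exists w; split => //.
- apply: (cyl_agree hc). rewrite (hL w hw). exact: he.
- apply: (cyl_agree hc). rewrite (hL w hw) => i hi. by rewrite he.
Qed.

Lemma union_mean (nu : (Omega X -> Prop) -> R)
  (add : forall A B, clopen A -> clopen B -> (forall xi, ~ (A xi /\ B xi)) ->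
     nu (fun xi => A xi \/ B xi) = (nu A + nu B)%R)
  (hcyl : forall w, nu (cyl w) = (rr ^ size w)%R) m L :
  uniq L -> (forall w, w \in L -> size w = m) -> nu (U L) = (INR (size L) * rr ^ m)%R.
Proof.
have F0 : nu (fun _ => False) = 0%R.
  have cF : clopen (fun _ : Omega X => False) by apply: (@det_clopen _ _ 0) => *.
  have := add _ _ cF cF (fun _ h => proj1 h).
  have -> : (fun xi : Omega X => False \/ False) = (fun _ => False).
    apply: functional_extensionality => xi; apply: propositional_extensionality; tauto.
  lra.
elim: L => [|w L IH] /= hu hL.
  have -> : U [::] = (fun _ => False).
    apply: functional_extensionality => xi; apply: propositional_extensionality.
    split => // -[w [h _]]. by rewrite in_nil in h.
  rewrite F0 /=; ring.
case/andP: hu => hw hu.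
have hL' : forall w', w' \in L -> size w' = m by move=> w' h; apply: hL; rewrite in_cons h orbT.
have -> : U (w :: L) = (fun z => cyl w z \/ U L z).
  apply: functional_extensionality => z; apply: propositional_extensionality.
  split.
  - move=> [w' [h hc]]. move: h; rewrite in_cons => /orP [/eqP <-|h]; first by left.
    right; by exists w'.
  - move=> [h|[w' [h hc]]]; first by exists w; rewrite in_cons eqxx.
    exists w'; by rewrite in_cons h orbT.
rewrite add.
- rewrite IH // hcyl (hL w) ?in_cons ?eqxx //. case: (size L) => [|k] /=; ring.
- exact: (det_clopen (@det_cyl _ w)).
- exact: (det_clopen (det_U hL')).
- move=> z [h1 [w' [h2 h3]]]. have e : w = w'.
    apply: (cyl_same _ h1 h3). rewrite (hL w) ?in_cons ?eqxx // (hL' w' h2) //.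
  by move: hw; rewrite e h2.
Qed.

Lemma det_U_eq A n : det A n -> A = U [seq u <- allw X n | asb (A (ocat u c0))].
Proof.
move=> hd. apply: functional_extensionality => z; apply: propositional_extensionality.
split.
- move=> hz. exists (mkseq z n). rewrite mem_filter mem_allw size_mkseq eqxx andbT.
  split; last exact: (@cyl_self _ z n).
  apply/asbP. apply/(hd _ z) => //. apply/cyl_mkseq.
  exact: (@cyl_ocat_self _ (mkseq z n) c0).
- move=> [w [hw hc]]. move: hw; rewrite mem_filter mem_allw => /andP [/asbP hA /eqP hs].
  apply/(hd (ocat w c0) z) => //. rewrite -hs => i hi.
  have h1 := (@cyl_ocat_self _ w c0). by rewrite (h1 i hi) (hc i hi); apply: set_nth_default.
Qed.

Lemma mean_unique (nu : (Omega X -> Prop) -> R)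
  (add : forall A B, clopen A -> clopen B -> (forall xi, ~ (A xi /\ B xi)) ->
     nu (fun xi => A xi \/ B xi) = (nu A + nu B)%R)
  (hcyl : forall w, nu (cyl w) = (rr ^ size w)%R) A : clopen A -> nu A = mu A.
Proof.
move=> cA. case: (clopen_det x0 cA) => n hd. rewrite (det_U_eq hd).
have hu : uniq [seq u <- allw X n | asb (A (ocat u c0))] by apply: filter_uniq; exact: uniq_allw.
have hs : forall w, w \in [seq u <- allw X n | asb (A (ocat u c0))] -> size w = n.
  by move=> w; rewrite mem_filter mem_allw => /andP [_ /eqP].
rewrite (union_mean add hcyl hu hs) (union_mean mu_add mu_cyl hu hs) //.
Qed.

End Measure.

Lemma union_sum (X : finType) (nu : (Omega X -> Prop) -> R)
  (add : forall A B, clopen A -> clopen B -> (forall xi, ~ (A xi /\ B xi)) ->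
     nu (fun xi => A xi \/ B xi) = (nu A + nu B)%R) m L :
  uniq L -> (forall w, w \in L -> size w = m) ->
  nu (U L) = foldr (fun w acc => nu (cyl w) + acc)%R 0%R L.
Proof.
have F0 : nu (fun _ => False) = 0%R.
  have cF : clopen (fun _ : Omega X => False) by apply: (@det_clopen _ _ 0) => *.
  have := add _ _ cF cF (fun _ h => proj1 h).
  have -> : (fun xi : Omega X => False \/ False) = (fun _ => False).
    apply: functional_extensionality => xi; apply: propositional_extensionality; tauto.
  lra.
elim: L => [|w L IH] /= hu hL.
  have -> : U ([::] : seq (seq X)) = (fun _ : Omega X => False).
    apply: functional_extensionality => xi; apply: propositional_extensionality.
    split => // -[w [h _]]. by rewrite in_nil in h.
  by rewrite F0.
case/andP: hu => hw hu.
have hL' : forall w', w' \in L -> size w' = m by move=> w' h; apply: hL; rewrite in_cons h orbT.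
have -> : U (w :: L) = (fun z => cyl w z \/ U L z).
  apply: functional_extensionality => z; apply: propositional_extensionality.
  split.
  - move=> [w' [h hc]]. move: h; rewrite in_cons => /orP [/eqP <-|h]; first by left.
    right; by exists w'.
  - move=> [h|[w' [h hc]]]; first by exists w; rewrite in_cons eqxx.
    exists w'; by rewrite in_cons h orbT.
rewrite add.
- by rewrite IH.
- exact: (det_clopen (@det_cyl _ w)).
- exact: (det_clopen (det_U hL')).
- move=> z [h1 [w' [h2 h3]]]. have e : w = w'.
    apply: (cyl_same _ h1 h3). rewrite (hL w) ?in_cons ?eqxx // (hL' w' h2) //.
  by move: hw; rewrite e h2.
Qed.

Section Bisect.
Variable X : finType.
Variable G : SSGroup X.
Variable x0 : X.

Section AB.
Variables a b : seq X.
Hypothesis hab : size a = size b.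

Definition s0 : Tri G := mkTri b (gone G) a.
Definition Bab (t : Tri G) (xi : Omega X) : Prop :=
  germ_rep t xi /\ cyl a xi /\ germ_eq s0 t xi.

Lemma s0_rep xi : cyl a xi -> germ_rep s0 xi.
Proof. move=> h; split => //. Qed.

Lemma grange_s0 xi : grange s0 xi = ocat b (oshift xi (size a)).
Proof. by rewrite /grange /= omega_one. Qed.

Lemma Bab_range t xi : Bab t xi -> grange t xi = ocat b (oshift xi (size a)).
Proof.
move=> [ht [ha he]]. rewrite -grange_s0. symmetry. apply: germ_grange => //.
Qed.

Lemma Bab_cob : cob Bab.
Proof.
split; [split|split; [|split]].
- by move=> s xi [].
- move=> s t xi [hs [ha he]] ht hst. split => //; split => //.
  exact: (germ_eq_trans (s0_rep ha) hs ht he hst).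
- move=> t xi [ht [ha he]].
  case: (germ_eq_ge (s0_rep ha) ht he) => d [hd hg].
  have hg' := hg. case: hg' => [hp1 [hp2 _]].
  exists (cyl d); split; [split; [|split]|split] => //.
  + by case: ht.
  + exact: (det_clopen (@det_cyl _ d)).1.
  + move=> y hy. rewrite (drop_prefix hp2) in hy. exact: cyl_catl hy.
  + move=> y hy. split; [split|split].
    * by case: ht.
    * rewrite (drop_prefix hp2) in hy. exact: cyl_catl hy.
    * rewrite /= (drop_prefix hp1) in hy. exact: cyl_catl hy.
    * exact: ge_germ hy hg.
- move=> I bs Us hbas hcov.
  pose V i := fun y => Us i y /\ cyl a y /\ germ_eq (bs i) s0 y.
  have hV : forall i, oopen (V i).
    move=> i y [hU [ha he]]. case: (hbas i) => [hS [hop hsub]].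
    have hr : germ_rep (bs i) y by split => //; exact: hsub.
    case: (germ_eq_ge hr (s0_rep ha) he) => d [hd hg].
    case: (hop y hU) => n1 hn1. exists (maxn n1 (size d)) => eta he'.
    have hde : cyl d eta.
      apply: (cyl_agree hd) => i' hi'. symmetry; apply: he'. exact: leq_trans hi' (leq_maxr _ _).
    split; [|split].
    + apply: hn1 => i' hi'. apply: he'. exact: leq_trans hi' (leq_maxl _ _).
    + case: hg => _ [hp _]. rewrite /= (drop_prefix hp) in hde. exact: cyl_catl hde.
    + exact: ge_germ hde hg.
  have hc : forall xi, cyl a xi -> exists i, V i xi.
    move=> xi ha. case: (hcov s0 xi) => [|i [h1 h2]].
      split; [exact: s0_rep|split => //; exact: germ_eq_refl].
    by exists i.
  case: (cyl_compact x0 hV hc) => l Hl. exists l => t xi [ht [ha he]].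
  case: (Hl xi ha) => i [hi [hU [_ he']]]. exists i; split => //; split => //.
  case: (hbas i) => [hS [_ hsub]].
  apply: (germ_eq_trans _ (s0_rep ha) ht he' he). split => //; exact: hsub.
- move=> s t xi eta hs ht. split.
  + move=> heq. have e : xi = eta by apply: functional_extensionality.
    subst eta. case: hs => [hs [ha he]]; case: ht => [ht [_ he2]].
    exact: (germ_eq_trans hs (s0_rep ha) ht (germ_eq_sym he) he2).
  + move=> hg. have e1 : grange s xi = grange t eta by apply: functional_extensionality.
    rewrite (Bab_range hs) (Bab_range ht) in e1.
    have e2 := f_equal (fun f : Omega X => oshift f (size b)) e1. rewrite !shift_ocat in e2.
    have exe : xi = eta.
      case: hs => [_ [ha _]]; case: ht => [_ [ha' _]].
      by rewrite -(ocat_shift ha) e2 (ocat_shift ha').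
    subst eta. split => //.
    case: hs => [hs [ha he]]; case: ht => [ht [_ he2]].
    exact: (germ_eq_trans hs (s0_rep ha) ht (germ_eq_sym he) he2).
Qed.

Lemma Bab_dom : gdom Bab = cyl a.
Proof.
apply: functional_extensionality => xi; apply: propositional_extensionality.
split; first by move=> [s [_ [h _]]].
move=> h; exists s0; split; [exact: s0_rep|split => //; exact: germ_eq_refl].
Qed.

Lemma Bab_ran : gran Bab = cyl b.
Proof.
apply: functional_extensionality => z; apply: propositional_extensionality.
split.
- move=> [s [xi [hs hz]]]. have e : grange s xi = z by apply: functional_extensionality.
  rewrite -e (Bab_range hs). exact: (@cyl_ocat_self _ b).
- move=> hz. exists s0, (ocat a (oshift z (size b))). split.
    have ha := (@cyl_ocat_self _ a (oshift z (size b))).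
    split; [exact: s0_rep|split => //; exact: germ_eq_refl].
  move=> n. rewrite grange_s0. rewrite -hab shift_ocat hab (ocat_shift hz) //.
Qed.

End AB.

Lemma nu_same (nu : (Omega X -> Prop) -> R) : inv_mean G nu ->
  forall a b : seq X, size a = size b -> nu (cyl a) = nu (cyl b).
Proof.
move=> [_ [_ [hinv _]]] a b hab.
rewrite -(Bab_dom hab) -(Bab_ran hab). apply: hinv. exact: Bab_cob.
Qed.

Lemma nu_cyl (nu : (Omega X -> Prop) -> R) : inv_mean G nu ->
  forall w : seq X, nu (cyl w) = (rr X ^ size w)%R.
Proof.
move=> hm. have [_ [h1 [_ hadd]]] := hm.
elim/last_ind => [|w x IH].
  have -> : cyl [::] = (fun _ : Omega X => True).
    apply: functional_extensionality => xi; apply: propositional_extensionality; by split.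
  by rewrite h1.
have hu : uniq (map (rcons w) (enum X)) by rewrite map_inj_uniq ?enum_uniq //; exact: rcons_injr.
have hs : forall v, v \in map (rcons w) (enum X) -> size v = (size w).+1.
  by move=> v /mapP [y _ ->]; rewrite size_rcons.
have ecyl : cyl w = U (map (rcons w) (enum X)).
  apply: functional_extensionality => z; apply: propositional_extensionality. split.
  - move=> hz. exists (rcons w (z (size w))). split; first by apply: map_f; rewrite mem_enum.
    apply/cylE. by rewrite size_rcons mkseqS (proj1 (cylE w z) hz).
  - move=> [v [/mapP [y _ ->] hc]]. rewrite -cats1 in hc. exact: cyl_catl hc.
have := union_sum hadd hu hs. rewrite -ecyl IH.
have -> : foldr (fun w0 acc => nu (cyl w0) + acc)%R 0%R (map (rcons w) (enum X)) =
    (INR #|X| * nu (cyl (rcons w x)))%R.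
  rewrite cardE. elim: (enum X) => [|y s IHs] /=; first ring.
  rewrite IHs (@nu_same nu hm (rcons w y) (rcons w x)); last by rewrite !size_rcons.
  case: (size s) => [|k] /=; ring.
move=> e. rewrite size_rcons /= e /rr. field. exact: INRX x0.
Qed.

End Bisect.

Section Inv.
Variable X : finType.
Variable G : SSGroup X.
Variable x0 : X.

Lemma dom_level (B : Tri G -> Omega X -> Prop) : cob B ->
  exists n, forall w, size w = n -> (exists z, cyl w z /\ gdom B z) ->
  exists s, S_eq s /\ prefix (tb s) w /\ forall y, cyl w y -> B s y.
Proof.
move=> [[hrep hcl] [hop [hcp hbi]]].
pose I := {p : Tri G * Omega X | B p.1 p.2}.
pose P (i : I) m := size (tb (sval i).1) <= m /\ forall y, agree m y (sval i).2 -> B (sval i).1 y.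
have hex : forall i : I, exists m, P i m.
  move=> [[s xi] h] /=. case: (hop s xi h) => U [[hS [hU hUb]] [hUx hUB]].
  case: (hU xi hUx) => m0 hm0.
  exists (maxn m0 (size (tb s))); split; first exact: leq_maxr.
  move=> y hy; apply: hUB; apply: hm0 => i hi; apply: hy; exact: leq_trans hi (leq_maxl _ _).
pose mi (i : I) := epsilon (inhabits 0) (P i).
have hmi : forall i, P i (mi i) := fun i => epsilon_spec _ _ (hex i).
pose Us (i : I) := fun y => agree (mi i) y (sval i).2.
have hb : forall i, basic_ok (sval i).1 (Us i).
  move=> i. have h := svalP i. have [hS hc] := hrep _ _ h. split => //. split.
  - move=> y hy; exists (mi i) => eta he j hj. rewrite he // hy //.
  - move=> y hy. apply: (cyl_agree hc). move=> j hj. symmetry; apply: hy.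
    exact: leq_trans hj (hmi i).1.
case: (hcp I (fun i => (sval i).1) Us hb).
  move=> s xi hsx. exists (exist _ (s,xi) hsx); split; first by move=> j hj.
  exact: germ_eq_refl.
move=> l Hl.
have hle0 : forall l' : list I, forall i, List.In i l' -> mi i <= foldr (fun i acc => maxn (mi i) acc) 0 l'.
  elim => [|j l' IH] i //= [->|h]; first exact: leq_maxl.
  apply: leq_trans (IH _ h) _; exact: leq_maxr.
pose n := foldr (fun i acc => maxn (mi i) acc) 0 l.
have hle : forall i, List.In i l -> mi i <= n := hle0 l.
exists n => w hw [z [hz [s hs]]].
case: (Hl s z hs) => i [hi [hUi _]].
have hmn := hle i hi.
have hy : forall y, cyl w y -> agree (mi i) y (sval i).2.
  move=> y hyw j hj. rewrite -hUi //.
  have := agree_mkseq (etrans (proj1 (cylE w y) hyw) (esym (proj1 (cylE w z) hz))).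
  move=> h; apply: h. rewrite hw. exact: leq_trans hj hmn.
have hsi := svalP i. have [hS hc] := hrep _ _ hsi.
exists (sval i).1; split => //; split.
- apply: (cyl_prefix _ hz).
  + apply: (cyl_agree hc) => j hj. symmetry; apply: (hy z hz). exact: leq_trans hj (hmi i).1.
  + rewrite hw. exact: leq_trans (hmi i).1 hmn.
- move=> y hyw. apply: (hmi i).2. exact: hy.
Qed.

Lemma mu_inv (B : Tri G -> Omega X -> Prop) : cob B -> mu x0 (gdom B) = mu x0 (gran B).
Proof.
move=> hcob. have hcob' := hcob. case: hcob' => [[hrep hcl] [hop [hcp hbi]]].
case: (dom_level hcob) => n Hn.
pose spec w s := S_eq s /\ prefix (tb s) w /\ forall y, cyl w y -> B s y.
pose sw w := epsilon (inhabits (mkTri [::] (gone G) [::])) (spec w).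
have hsw : forall w, size w = n -> gdom B (ocat w (c0 x0)) -> spec w (sw w).
  move=> w hs hd. apply: epsilon_spec. apply: Hn => //.
  exists (ocat w (c0 x0)); split => //. exact: (@cyl_ocat_self _ w).
pose D := [seq w <- allw X n | asb (gdom B (ocat w (c0 x0)))].
have memD : forall w, w \in D -> size w = n /\ gdom B (ocat w (c0 x0)).
  by move=> w; rewrite mem_filter mem_allw => /andP [/asbP h /eqP h'].
have inD : forall z, gdom B z -> mkseq z n \in D /\ spec (mkseq z n) (sw (mkseq z n)).
  move=> z hz. have hs : size (mkseq z n) = n by rewrite size_mkseq.
  have hd : gdom B (ocat (mkseq z n) (c0 x0)).
    case: (Hn _ hs) => [|s [_ [_ h]]].
      exists z; split => //; exact: (@cyl_self _ z n).
    exists s; apply: h. exact: (@cyl_ocat_self _ (mkseq z n)).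
  split; last exact: hsw.
  by rewrite mem_filter mem_allw hs eqxx andbT; apply/asbP.
pose phi w := ta (sw w) ++ act (tg (sw w)) (drop (size (tb (sw w))) w).
have hphi : forall w, w \in D -> size (phi w) = n.
  move=> w /memD [hs hd]. have [hS [hp _]] := hsw w hs hd.
  rewrite /phi size_cat act_size size_drop hS. rewrite -hs subnKC //. exact: size_prefix hp.
have hD : gdom B = U D.
  apply: functional_extensionality => z; apply: propositional_extensionality. split.
  - move=> hz. exists (mkseq z n). split; [exact: (inD z hz).1 | exact: (@cyl_self _ z n)].
  - move=> [w [hw hc]]. have [hs hd] := memD w hw. have [_ [_ h]] := hsw w hs hd.
    exists (sw w). exact: h.
have hR : gran B = U (map phi D).
  apply: functional_extensionality => z; apply: propositional_extensionality. split.
  - move=> [s [xi [hs hz]]]. have ez : grange s xi = z by apply: functional_extensionality.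
    have hxd : gdom B xi by exists s.
    have [hwD [hS [hp hB]]] := inD xi hxd.
    set w := mkseq xi n in hwD hS hp hB.
    have hBw : B (sw w) xi by apply: hB; exact: (@cyl_self _ xi n).
    have hge : germ_eq s (sw w) xi by case: (hbi s (sw w) xi xi hs hBw) => h _; exact: h.
    have eg := germ_grange (hrep _ _ hs) (hrep _ _ hBw) hge.
    exists (phi w); split; first exact: map_f.
    rewrite -ez eg. apply: grange_cyl hp _. exact: (@cyl_self _ xi n).
  - move=> [v [/mapP [w hw ->] hc]].
    have [hs hd] := memD w hw. have [hS [hp hB]] := hsw w hs hd.
    case: (grange_surj hS hc) => xi [hxi ez].
    rewrite -(drop_prefix hp) in hxi.
    exists (sw w), xi; split; first exact: hB.
    by rewrite ez.
have huD : uniq D by apply: filter_uniq; exact: uniq_allw.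
have hsD : forall w, w \in D -> size w = n by move=> w /memD [].
have huR : uniq (map phi D).
  rewrite map_inj_in_uniq // => w1 w2 h1 h2 e.
  have [hs1 hd1] := memD w1 h1. have [hS1 [hp1 hB1]] := hsw w1 hs1 hd1.
  have [hs2 hd2] := memD w2 h2. have [hS2 [hp2 hB2]] := hsw w2 hs2 hd2.
  have hz : cyl (phi w1) (ocat (phi w1) (c0 x0)) := (@cyl_ocat_self _ (phi w1) (c0 x0)).
  have hz2 : cyl (phi w2) (ocat (phi w1) (c0 x0)) by rewrite -e.
  case: (grange_surj hS1 hz) => xi1 [hx1 e1].
  case: (grange_surj hS2 hz2) => xi2 [hx2 e2].
  rewrite -(drop_prefix hp1) in hx1. rewrite -(drop_prefix hp2) in hx2.
  case: (hbi _ _ xi1 xi2 (hB1 _ hx1) (hB2 _ hx2)) => _ h.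
  case: h => [k|hxx _]; first by rewrite e1 e2.
  have exx : xi1 = xi2 by apply: functional_extensionality.
  subst xi2. apply: (cyl_same _ hx1 hx2). by rewrite hs1 hs2.
have hsR : forall v, v \in map phi D -> size v = n by move=> v /mapP [w hw ->]; exact: hphi.
rewrite hD hR (union_mean (@mu_add _ x0) (@mu_cyl _ x0) huD hsD).
by rewrite (union_mean (@mu_add _ x0) (@mu_cyl _ x0) huR hsR) size_map.
Qed.

End Inv.

Theorem mainTheorem17 (X : finType) (G : SSGroup X) (hX : (0 < #|X|)%N) :
  exists mu : (Omega X -> Prop) -> R,
    inv_mean G mu /\
    (forall a : seq X, mu (cyl a) = pow (Rinv (INR #|X|)) (size a)) /\
    (forall nu : (Omega X -> Prop) -> R, inv_mean G nu ->
       forall A, clopen A -> nu A = mu A).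
Proof.
have [x0 _] : exists x : X, true by case/card_gt0P: hX => x _; exists x.
exists (mu x0). split; [|split].
- split; [|split; [|split]].
  + move=> A _; exact: mu_ge0.
  + exact: mu_true.
  + move=> B hB; exact: mu_inv.
  + exact: mu_add.
- exact: mu_cyl.
- move=> nu hnu A hA. have [_ [_ [_ hadd]]] := hnu.
  exact: (mean_unique x0 hadd (nu_cyl x0 hnu) hA).
Qed.
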